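(* Let $a\in(0,1)$, $r\ge1$, $\kappa_1\in(a,1)$, and assume $r\le \dfrac{as}{\sqrt{5\log\big(2/(1-a/\kappa_1)\big)}}$. Then for every $\theta\in\mathcal{D}_{a,r}$, $$\langle M(\theta),\theta^*\rangle\ge (a/\kappa_1)\|\theta^*\|^2 .$$
   Context: Fix $d\ge1$, $\sigma>0$ and $\theta^*\in\mathbb{R}^d\setminus\{0\}$. Let $Y$ be distributed according to the mixture $\tfrac12 N(\theta^*,\sigma^2I_d)+\tfrac12 N(-\theta^*,\sigma^2I_d)$. Let $\omega(t):=1/(1+e^{-2t})$. The population EM operator is $M(\theta):=2\,\mathbb{E}\big[Y\,\omega(\langle\theta,Y\rangle/\sigma^2)\big]$. The signal-to-noise ratio is $s:=\|\theta^*\|/\sigma$. For $a\in(0,1)$ and $r\ge1$ define $\mathcal{H}_a:=\{\theta:\langle\theta,\theta^*\rangle\ge a\|\theta^*\|^2\}$, $\mathcal{B}_r:=\{\theta:\|\theta\|\le r\|\theta^*\|\}$ and $\mathcal{D}_{a,r}:=\mathcal{H}_a\cap\mathcal{B}_r$. *)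

(* Defs.v *)
From Stdlib Require Import Reals Lra.
Open Scope R_scope.

(* Vectors of R^d are represented as functions nat -> R; only coordinates
   0..d-1 are meaningful. *)
Definition inner (d : nat) (u v : nat -> R) : R :=
  match d with O => 0 | S d' => sum_f_R0 (fun i => u i * v i) d' end.

Definition norm (d : nat) (u : nat -> R) : R := sqrt (inner d u u).

Definition improper_int (f : R -> R) (l : R) : Prop :=
  (forall a b, a <= b -> inhabited (Riemann_integrable f a b)) /\
  (forall eps, 0 < eps -> exists A, 0 < A /\
     forall a b (pr : Riemann_integrable f a b),
       a <= - A -> A <= b -> Rabs (RiemannInt pr - l) < eps).

(* Iterated improper integral over R^d of F : (nat -> R) -> R,
   integrating coordinate 0 outermost. [iint d F l] means the integral
   exists and equals l. *)
Definition vcons (x : R) (v : nat -> R) : nat -> R :=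
  fun i => match i with O => x | S k => v k end.

Fixpoint iint (d : nat) (F : (nat -> R) -> R) (l : R) : Prop :=
  match d with
  | O => l = F (fun _ => 0)
  | S d' => exists g : R -> R, improper_int g l /\
              forall x, iint d' (fun v => F (vcons x v)) (g x)
  end.

Definition gauss_density (d : nat) (sigma : R) (mu y : nat -> R) : R :=
  exp (- inner d (fun i => y i - mu i) (fun i => y i - mu i) / (2 * sigma ^ 2))
  / (sqrt (2 * PI * sigma ^ 2)) ^ d.

Definition mix_density (d : nat) (sigma : R) (theta_star y : nat -> R) : R :=
  / 2 * gauss_density d sigma theta_star y
  + / 2 * gauss_density d sigma (fun i => - theta_star i) y.

Definition omega (t : R) : R := / (1 + exp (- (2 * t))).

(* [is_EM d sigma theta_star theta m] : m = M(theta) = 2 E[Y omega(<theta,Y>/sigma^2)],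
   coordinatewise, the expectation written as an integral against the
   mixture density. *)
Definition is_EM (d : nat) (sigma : R) (theta_star theta m : nat -> R) : Prop :=
  forall j, (j < d)%nat ->
    iint d (fun y => 2 * (y j * omega (inner d theta y / sigma ^ 2))
                     * mix_density d sigma theta_star y) (m j).

Definition snr (d : nat) (sigma : R) (theta_star : nat -> R) : R :=
  norm d theta_star / sigma.

Definition in_H (d : nat) (a : R) (theta_star theta : nat -> R) : Prop :=
  inner d theta theta_star >= a * norm d theta_star ^ 2.

Definition in_B (d : nat) (r : R) (theta_star theta : nat -> R) : Prop :=
  norm d theta <= r * norm d theta_star.

Definition in_D (d : nat) (a r : R) (theta_star theta : nat -> R) : Prop :=
  in_H d a theta_star theta /\ in_B d r theta_star theta.

(* Main.v *)
Require Import Defs.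
From Stdlib Require Import Reals Lra Lia.
From Coquelicot Require Coquelicot.
Open Scope R_scope.

Module Aux.
Import Coquelicot.Coquelicot.
Open Scope R_scope.


Definition gf (u : R) : R := exp (- (u * u)).
Definition Fg (x : R) : R := RInt gf 0 x.
Definition kf (x t : R) : R := exp (- (x * x) * (1 + t * t)) / (1 + t * t).
Definition Kg (x : R) : R := RInt (kf x) 0 1.

Lemma gf_cont x : continuous gf x.
Proof. apply continuity_pt_filterlim. unfold gf. reg. Qed.

Lemma gf_exRInt a b : ex_RInt gf a b.
Proof. apply (ex_RInt_continuous (V:=R_CompleteNormedModule)). intros; apply gf_cont. Qed.

Lemma Fg_derive x : is_derive Fg x (gf x).
Proof.
  apply is_derive_RInt with (a := 0).
  - apply filter_forall. intros b. apply (RInt_correct (V:=R_CompleteNormedModule)), gf_exRInt.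
  - apply gf_cont.
Qed.

Lemma pos1t t : 0 < 1 + t * t.
Proof. nra. Qed.

Lemma kf_derive u t : is_derive (fun z => kf z t) u (-2 * u * exp (- (u*u) * (1 + t*t))).
Proof.
  unfold kf. auto_derive. { pose proof (pos1t t); lra. }
  field. pose proof (pos1t t); lra.
Qed.

Lemma RInt_mulc c f a b : ex_RInt f a b -> RInt (fun t => c * f t) a b = c * RInt f a b.
Proof. intros H. exact (RInt_scal f a b c H). Qed.

Lemma RInt_lin (f : R -> R) u v a b : ex_RInt f (u*a+v) (u*b+v) ->
  RInt (fun y => u * f (u*y+v)) a b = RInt f (u*a+v) (u*b+v).
Proof. intros H. exact (RInt_comp_lin f u v a b H). Qed.


Lemma kf_Derive u t : Derive (fun z => kf z t) u = -2 * u * exp (- (u*u) * (1 + t*t)).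
Proof. apply is_derive_unique, kf_derive. Qed.

Lemma kf_cont x t : continuous (kf x) t.
Proof. apply continuity_pt_filterlim. unfold kf. reg. pose proof (pos1t t); lra. Qed.

Lemma Kg_derive x : is_derive Kg x (RInt (fun t => -2 * x * exp (- (x*x) * (1 + t*t))) 0 1).
Proof.
  unfold Kg.
  rewrite <- (RInt_ext (fun t => Derive (fun u => kf u t) x)).
  2:{ intros; apply kf_Derive. }
  apply (is_derive_RInt_param kf 0 1 x).
  - apply filter_forall. intros y t _. eexists; apply kf_derive.
  - intros t _. eapply continuity_2d_pt_ext.
    { intros u v. symmetry. apply kf_Derive. }
    apply continuity_2d_pt_mult. apply continuity_2d_pt_mult.
    apply continuity_2d_pt_const. apply continuity_2d_pt_id1.
    apply continuity_1d_2d_pt_comp. apply derivable_continuous_pt, derivable_pt_exp.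
    apply continuity_2d_pt_mult. apply continuity_2d_pt_opp. apply continuity_2d_pt_mult; apply continuity_2d_pt_id1.
    apply continuity_2d_pt_plus. apply continuity_2d_pt_const. apply continuity_2d_pt_mult; apply continuity_2d_pt_id2.
  - apply filter_forall. intros y. apply (ex_RInt_continuous (V:=R_CompleteNormedModule)). intros; apply kf_cont.
Qed.

Lemma Kg_derive' x : is_derive Kg x (-2 * gf x * Fg x).
Proof.
  replace (-2 * gf x * Fg x) with (RInt (fun t => -2 * x * exp (- (x*x) * (1 + t*t))) 0 1).
  apply Kg_derive.
  rewrite (RInt_ext _ (fun t => (-2 * gf x) * (x * (gf (x * t + 0))))).
  2:{ intros t _. match goal with |- ?a = ?b => change (@eq R a b) end. unfold gf.
      replace (- (x*x) * (1 + t*t)) with (-(x*x) + - ((x*t+0)*(x*t+0))) by ring.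
      rewrite exp_plus. ring. }
  rewrite RInt_mulc. 2:{ apply (ex_RInt_continuous (V:=R_CompleteNormedModule)). intros; apply continuity_pt_filterlim. unfold gf. reg. }
  rewrite RInt_lin. 2: apply gf_exRInt.
  unfold Fg. f_equal. f_equal; ring.
Qed.


Definition hg x := Fg x * Fg x + Kg x.

Lemma hg_derive x : is_derive hg x 0.
Proof.
  unfold hg. eapply is_derive_ext. { intros; reflexivity. }
  replace 0 with (gf x * Fg x + Fg x * gf x + (-2 * gf x * Fg x)) by ring.
  apply (is_derive_plus (K:=R_AbsRing) (V:=R_NormedModule)).
  apply (is_derive_mult (K:=R_AbsRing)); try apply Fg_derive. intros; simpl; apply Rmult_comm.
  apply Kg_derive'.
Qed.

Lemma hg_const x : hg x = hg 0.
Proof.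
  assert (H := is_RInt_derive (V:=R_CompleteNormedModule) hg (fun _ => 0) 0 x).
  assert (H0 : is_RInt (V:=R_CompleteNormedModule) (fun _ => 0) 0 x (minus (hg x) (hg 0))).
  { apply H. intros; apply hg_derive. intros; apply continuous_const. }
  apply is_RInt_unique in H0. rewrite RInt_const in H0.
  unfold minus, plus, opp, scal in H0; simpl in H0. unfold mult in H0; simpl in H0.
  lra.
Qed.

Lemma hg0 : hg 0 = PI / 4.
Proof.
  unfold hg, Fg, Kg. rewrite RInt_point.
  rewrite (RInt_ext _ (fun t => / (1 + t²))).
  2:{ intros t _. match goal with |- ?a = ?b => change (@eq R a b) end. unfold kf.
      replace (- (0*0) * (1 + t*t)) with 0 by ring. rewrite exp_0. unfold Rsqr. field. nra. }
  assert (H := is_RInt_derive (V:=R_CompleteNormedModule) atan (fun t => / (1 + t²)) 0 1).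
  assert (H' : is_RInt (fun t : R => / (1 + t²)) 0 1 (minus (atan 1) (atan 0))).
  { apply H. intros. apply is_derive_atan. intros. apply continuity_pt_filterlim. reg. unfold Rsqr; nra. }
  rewrite (is_RInt_unique _ _ _ _ H').
  unfold minus, plus, opp; simpl. rewrite atan_1, atan_0. unfold zero; simpl. lra.
Qed.


Lemma kf_exRInt x a b : ex_RInt (kf x) a b.
Proof. apply (ex_RInt_continuous (V:=R_CompleteNormedModule)). intros; apply kf_cont. Qed.

Lemma Kg_bounds x : 0 <= Kg x <= gf x.
Proof.
  unfold Kg. split.
  - apply RInt_ge_0. lra. apply kf_exRInt. intros t _. unfold kf.
    apply Rdiv_le_0_compat. left; apply exp_pos. apply pos1t.
  - apply Rle_trans with (RInt (fun _ => gf x) 0 1).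
    + apply RInt_le. lra. apply kf_exRInt. apply ex_RInt_const.
      intros t Ht. unfold kf, gf. pose proof (pos1t t).
      apply Rle_trans with (exp (- (x*x) * (1 + t*t))).
      * unfold Rdiv. rewrite <- (Rmult_1_r (exp _)) at 2. apply Rmult_le_compat_l. left; apply exp_pos.
        apply Rle_trans with (/1). apply Rinv_le_contravar; nra. rewrite Rinv_1; lra.
      * destruct (Rle_lt_or_eq_dec _ _ (Rle_0_sqr x)) as [Hx|Hx]; unfold Rsqr in Hx.
        left; apply exp_increasing. assert (0 < t*t) by nra. nra. rewrite <- Hx. right. f_equal; ring.
    + rewrite RInt_const. unfold scal; simpl; unfold mult; simpl. lra.
Qed.

Lemma Fg_nonneg x : 0 <= x -> 0 <= Fg x.
Proof. intros. unfold Fg. apply RInt_ge_0; auto. apply gf_exRInt. intros; left; apply exp_pos. Qed.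

Lemma Fg_odd x : Fg (-x) = - Fg x.
Proof.
  unfold Fg. replace (-x) with (-1 * x + 0) by ring.
  replace 0 with (-1 * 0 + 0) at 1 by ring.
  rewrite <- RInt_lin. 2: apply gf_exRInt.
  rewrite (RInt_ext _ (fun y => -1 * gf y)).
  2:{ intros t _. match goal with |- ?a = ?b => change (@eq R a b) end. unfold gf. f_equal. f_equal. ring. }
  rewrite RInt_mulc. ring. apply gf_exRInt.
Qed.

Lemma Fg_sq x : Fg x * Fg x = PI / 4 - Kg x.
Proof. pose proof (hg_const x). rewrite hg0 in H. unfold hg in H. lra. Qed.

Lemma sqrtPI_pos : 0 < sqrt PI.
Proof. apply sqrt_lt_R0, PI_RGT_0. Qed.

Lemma Fg_lim eps : 0 < eps -> exists A, 0 < A /\ forall x, A <= x -> Rabs (Fg x - sqrt PI / 2) < eps.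
Proof.
  intros He. pose proof sqrtPI_pos as Hs.
  exists (1 + 4 / (sqrt PI * eps)). split.
  { assert (0 < 4 / (sqrt PI * eps)). apply Rdiv_lt_0_compat; nra. lra. }
  intros x Hx.
  assert (Hq : 0 < 4 / (sqrt PI * eps)) by (apply Rdiv_lt_0_compat; nra).
  assert (Hx0 : 0 < x) by lra.
  pose proof (Fg_nonneg x (Rlt_le _ _ Hx0)) as HF.
  pose proof (Fg_sq x) as Hsq. pose proof (Kg_bounds x) as HK.
  assert (HP : sqrt PI * sqrt PI = PI) by (apply sqrt_sqrt; left; apply PI_RGT_0).
  assert (Hg : gf x * x <= 1).
  { unfold gf. pose proof (exp_ineq1_le (x*x)). pose proof (exp_pos (x*x)).
    rewrite exp_Ropp. apply (Rmult_le_reg_l (exp (x*x))); auto.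
    rewrite <- Rmult_assoc, Rinv_r by lra. nra. }
  assert (Hd : (sqrt PI / 2 - Fg x) * (sqrt PI / 2 + Fg x) = Kg x) by nra.
  assert (Hle : 0 <= sqrt PI / 2 - Fg x) by nra.
  assert (H1 : (sqrt PI / 2 - Fg x) * (sqrt PI / 2) <= gf x).
  { apply Rle_trans with (Kg x); [|lra]. rewrite <- Hd. apply Rmult_le_compat_l; lra. }
  rewrite Rabs_left1 by lra.
  assert (H2 : gf x * (4 / (sqrt PI * eps)) < 1).
  { apply Rle_lt_trans with (gf x * (x - 1)). apply Rmult_le_compat_l. left; apply exp_pos. lra.
    assert (0 < gf x) by apply exp_pos. nra. }
  assert (H3 : gf x * 4 < sqrt PI * eps).
  { unfold Rdiv in H2. apply (Rmult_lt_reg_r (/ (sqrt PI * eps))).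
    apply Rinv_0_lt_compat; nra. rewrite Rinv_r by nra. lra. }
  nra.
Qed.


Ltac toR := match goal with |- ?a = ?b => change (@eq R a b) end.

Definition impR (f : R -> R) (l : R) : Prop :=
  (forall a b, ex_RInt f a b) /\
  (forall eps, 0 < eps -> exists A, 0 < A /\
     forall a b, a <= -A -> A <= b -> Rabs (RInt f a b - l) < eps).

Lemma impR_improper f l : impR f l -> improper_int f l.
Proof.
  intros [H1 H2]. split.
  - intros a b _. constructor. apply ex_RInt_Reals_0, H1.
  - intros eps He. destruct (H2 eps He) as [A [HA HB]]. exists A; split; auto.
    intros a b pr Ha Hb. rewrite <- RInt_Reals. auto.
Qed.

Lemma improper_impR f l : improper_int f l -> impR f l.
Proof.
  intros [H1 H2]. split.
  - intros a b. destruct (Rle_or_lt a b) as [Hab|Hab].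
    + destruct (H1 a b Hab) as [pr]. apply ex_RInt_Reals_1, pr.
    + apply (ex_RInt_swap (V:=R_NormedModule)). destruct (H1 b a (Rlt_le _ _ Hab)) as [pr]. apply ex_RInt_Reals_1, pr.
  - intros eps He. destruct (H2 eps He) as [A [HA HB]]. exists A; split; auto.
    intros a b Ha Hb. destruct (H1 a b ltac:(lra)) as [pr]. rewrite (RInt_Reals _ _ _ pr). auto.
Qed.

Lemma ex_RInt_cont f a b : (forall x, continuity_pt f x) -> ex_RInt f a b.
Proof. intros H. apply (ex_RInt_continuous (V:=R_CompleteNormedModule)). intros; apply continuity_pt_filterlim, H. Qed.

Lemma RInt_plusR f g a b : ex_RInt f a b -> ex_RInt g a b ->
  RInt (fun x => f x + g x) a b = RInt f a b + RInt g a b.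
Proof. intros. exact (RInt_plus f g a b H H0). Qed.

Lemma ex_RInt_plusR f g a b : ex_RInt f a b -> ex_RInt g a b -> ex_RInt (fun x => f x + g x) a b.
Proof. intros. exact (ex_RInt_plus f g a b H H0). Qed.

Lemma ex_RInt_mulc c f a b : ex_RInt f a b -> ex_RInt (fun x => c * f x) a b.
Proof. intros. exact (ex_RInt_scal f a b c H). Qed.

Lemma impR_ext f g l : (forall x, f x = g x) -> impR f l -> impR g l.
Proof.
  intros E [H1 H2]. split.
  - intros a b. eapply ex_RInt_ext. 2: apply (H1 a b). intros; apply E.
  - intros eps He. destruct (H2 eps He) as [A [HA HB]]. exists A; split; auto.
    intros a b Ha Hb. rewrite <- (RInt_ext f). auto. intros; apply E.
Qed.

Lemma impR_plus f g l1 l2 : impR f l1 -> impR g l2 -> impR (fun x => f x + g x) (l1 + l2).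
Proof.
  intros [F1 F2] [G1 G2]. split.
  - intros; apply ex_RInt_plusR; auto.
  - intros eps He. destruct (F2 (eps/2) ltac:(lra)) as [A [HA HB]].
    destruct (G2 (eps/2) ltac:(lra)) as [B [HA' HB']].
    exists (Rmax A B). split. apply Rlt_le_trans with A; auto; apply Rmax_l.
    intros a b Ha Hb. rewrite RInt_plusR; auto.
    pose proof (Rmax_l A B); pose proof (Rmax_r A B).
    specialize (HB a b ltac:(lra) ltac:(lra)). specialize (HB' a b ltac:(lra) ltac:(lra)).
    apply Rabs_def2 in HB. apply Rabs_def2 in HB'. apply Rabs_def1; lra.
Qed.

Lemma impR_mulc c f l : impR f l -> impR (fun x => c * f x) (c * l).
Proof.
  intros [F1 F2]. split.
  - intros; apply ex_RInt_mulc; auto.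
  - intros eps He. destruct (F2 (eps / (Rabs c + 1))) as [A [HA HB]].
    { apply Rdiv_lt_0_compat; auto. pose proof (Rabs_pos c); lra. }
    exists A; split; auto. intros a b Ha Hb. rewrite RInt_mulc; auto.
    specialize (HB a b Ha Hb).
    replace (c * RInt f a b - c * l) with (c * (RInt f a b - l)) by ring.
    rewrite Rabs_mult. pose proof (Rabs_pos c).
    pose proof (Rabs_pos (RInt f a b - l)).
    apply Rle_lt_trans with ((Rabs c + 1) * Rabs (RInt f a b - l)). nra.
    apply Rmult_lt_reg_l with (/ (Rabs c + 1)). apply Rinv_0_lt_compat; lra.
    rewrite <- Rmult_assoc, Rinv_l by lra. unfold Rdiv in HB. lra.
Qed.

Lemma impR_le f g l1 l2 : (forall x, f x <= g x) -> impR f l1 -> impR g l2 -> l1 <= l2.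
Proof.
  intros Hfg [F1 F2] [G1 G2].
  destruct (Rle_or_lt l1 l2) as [H|H]; auto.
  set (eps := (l1 - l2) / 2).
  destruct (F2 eps ltac:(unfold eps; lra)) as [A [HA HB]].
  destruct (G2 eps ltac:(unfold eps; lra)) as [B [HA' HB']].
  set (C := Rmax A B). pose proof (Rmax_l A B); pose proof (Rmax_r A B).
  specialize (HB (-C) C ltac:(unfold C; lra) ltac:(unfold C; lra)).
  specialize (HB' (-C) C ltac:(unfold C; lra) ltac:(unfold C; lra)).
  assert (RInt f (-C) C <= RInt g (-C) C).
  { apply RInt_le; auto. unfold C; lra. }
  apply Rabs_def2 in HB. apply Rabs_def2 in HB'. unfold eps in *. lra.
Qed.

Lemma impR_lin f l u w : 0 < u -> impR f l -> impR (fun y => f (u * y + w)) (l / u).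
Proof.
  intros Hu [F1 F2].
  assert (Hex : forall a b, ex_RInt (fun y => f (u * y + w)) a b).
  { intros a b. eapply ex_RInt_ext.
    2: apply (ex_RInt_mulc (/u) (fun y => u * f (u * y + w))).
    intros; simpl. toR. field. lra.
    exact (ex_RInt_comp_lin f u w a b (F1 _ _)). }
  assert (HR : forall a b, RInt (fun y => f (u * y + w)) a b = / u * RInt f (u * a + w) (u * b + w)).
  { intros a b. rewrite <- RInt_lin. 2: apply F1. rewrite <- RInt_mulc.
    apply RInt_ext. intros; toR; field; lra.
    exact (ex_RInt_comp_lin f u w a b (F1 _ _)). }
  split; auto.
  intros eps He. destruct (F2 (eps * u) ltac:(nra)) as [A [HA HB]].
  exists ((A + Rabs w) / u + 1). split.
  { pose proof (Rabs_pos w). assert (0 <= (A + Rabs w) / u). apply Rle_div_r; auto; lra. lra. }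
  intros a b Ha Hb. rewrite HR.
  assert (Ha' : u * a + w <= - A).
  { assert (u * a <= u * (-((A + Rabs w)/u + 1))) by (apply Rmult_le_compat_l; lra).
    replace (u * (-((A + Rabs w)/u + 1))) with (-(A + Rabs w) - u) in H by (field; lra).
    pose proof (Rle_abs w). lra. }
  assert (Hb' : A <= u * b + w).
  { assert (u * ((A + Rabs w)/u + 1) <= u * b) by (apply Rmult_le_compat_l; lra).
    replace (u * ((A + Rabs w)/u + 1)) with ((A + Rabs w) + u) in H by (field; lra).
    pose proof (Rle_abs (-w)). rewrite Rabs_Ropp in H0. lra. }
  specialize (HB _ _ Ha' Hb').
  replace (/ u * RInt f (u * a + w) (u * b + w) - l / u) with (/u * (RInt f (u * a + w) (u * b + w) - l)) by (field; lra).
  rewrite Rabs_mult, Rabs_right by (left; apply Rinv_0_lt_compat; lra).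
  apply Rmult_lt_reg_l with u; auto. rewrite <- Rmult_assoc, Rinv_r by lra. lra.
Qed.

Lemma gauss_impR : impR gf (sqrt PI).
Proof.
  split. apply gf_exRInt.
  intros eps He. destruct (Fg_lim (eps/2) ltac:(lra)) as [A [HA HB]].
  exists A; split; auto. intros a b Ha Hb.
  assert (E : RInt gf a b = Fg b + Fg (-a)).
  { rewrite Fg_odd. unfold Fg. rewrite <- (RInt_Chasles (V:=R_CompleteNormedModule) gf a 0 b).
    2,3: apply gf_exRInt. rewrite <- (opp_RInt_swap (V:=R_CompleteNormedModule)). 2: apply gf_exRInt.
    unfold plus, opp; simpl. ring. }
  rewrite E. pose proof (HB b Hb). pose proof (HB (-a) ltac:(lra)).
  apply Rabs_def2 in H. apply Rabs_def2 in H0. apply Rabs_def1; lra.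
Qed.


Definition gs (s m x : R) : R := exp (- ((x - m) * (x - m)) / (2 * s ^ 2)).
Definition cs (s : R) : R := sqrt (2 * PI * s ^ 2).

Lemma cs_pos s : 0 < s -> 0 < cs s.
Proof. intros. unfold cs. apply sqrt_lt_R0. pose proof PI_RGT_0. assert (0 < s^2) by (apply pow_lt; auto). apply Rmult_lt_0_compat; lra. Qed.

Lemma cs_eq s : 0 < s -> cs s = sqrt PI * (s * sqrt 2).
Proof.
  intros Hs. unfold cs. rewrite (Rmult_comm 2 PI), Rmult_assoc, sqrt_mult_alt.
  2: left; apply PI_RGT_0. f_equal. rewrite sqrt_mult_alt by lra.
  rewrite <- (sqrt_pow2 s) at 2 by lra. simpl. rewrite Rmult_1_r. ring.
Qed.

Lemma gs_cont s m : forall x, continuity_pt (gs s m) x.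
Proof. intros. unfold gs. reg. Qed.

Lemma gs_impR s m : 0 < s -> impR (gs s m) (cs s).
Proof.
  intros Hs. assert (H2 : 0 < sqrt 2) by (apply sqrt_lt_R0; lra).
  set (u := / (s * sqrt 2)).
  assert (Hu : 0 < u) by (apply Rinv_0_lt_compat; nra).
  apply impR_ext with (fun x => gf (u * x + - m * u)).
  { intros x. unfold gf, gs, u. f_equal.
    assert (E2 : sqrt 2 * sqrt 2 = 2) by (apply sqrt_sqrt; lra).
    field_simplify_eq. 2: split; lra.
    replace (sqrt 2 ^ 2) with 2 by (simpl; lra). ring. }
  replace (cs s) with (sqrt PI / u). apply impR_lin; auto. apply gauss_impR.
  rewrite cs_eq by auto. unfold u. field. nra.
Qed.

Lemma gs_norm s m : 0 < s -> impR (fun x => gs s m x / cs s) 1.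
Proof.
  intros Hs. pose proof (cs_pos s Hs).
  apply impR_ext with (fun x => / cs s * gs s m x). intros; unfold Rdiv; ring.
  replace 1 with (/ cs s * cs s) by (field; lra). apply impR_mulc, gs_impR; auto.
Qed.

Lemma gs_shift s m v x : 0 < s ->
  exp (v * x) * gs s m x = exp (v * m + s ^ 2 * v ^ 2 / 2) * gs s (m + s ^ 2 * v) x.
Proof.
  intros Hs. unfold gs. rewrite <- !exp_plus. f_equal. field. lra.
Qed.

Lemma gs_exp s m v : 0 < s ->
  impR (fun x => exp (v * x) * gs s m x / cs s) (exp (v * m + s ^ 2 * v ^ 2 / 2)).
Proof.
  intros Hs. apply impR_ext with (fun x => exp (v * m + s ^ 2 * v ^ 2 / 2) * (gs s (m + s ^ 2 * v) x / cs s)).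
  intros x. rewrite gs_shift by auto. unfold Rdiv; ring.
  pose proof (impR_mulc (exp (v * m + s ^ 2 * v ^ 2 / 2)) _ _ (gs_norm s (m + s ^ 2 * v) Hs)) as H.
  rewrite Rmult_1_r in H. exact H.
Qed.

Lemma gs_small s m dl : 0 < s -> 0 < dl -> exists A, 0 < A /\ forall x, A <= Rabs x -> gs s m x < dl.
Proof.
  intros Hs Hd. exists (Rabs m + 1 + 2 * s ^ 2 / dl). split.
  { assert (0 <= 2 * s^2/dl). apply Rle_div_r; nra. pose proof (Rabs_pos m); lra. }
  intros x Hx. unfold gs.
  set (y := (x - m) * (x - m) / (2 * s ^ 2)).
  assert (Hm : 1 + 2 * s ^ 2 / dl <= Rabs (x - m)).
  { pose proof (Rabs_triang_inv x m). lra. }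
  assert (Hq : 0 < 2 * s ^ 2 / dl) by (apply Rdiv_lt_0_compat; nra).
  assert (Hsq : Rabs (x - m) <= (x - m) * (x - m)).
  { pose proof (Rsqr_abs (x-m)). unfold Rsqr in *. pose proof (Rabs_pos (x - m)). nra. }
  assert (Hs2 : 0 < 2 * s ^ 2) by (assert (0 < s^2) by (apply pow_lt; auto); lra).
  assert (Hy : / dl < y).
  { unfold y. apply Rmult_lt_reg_r with (2 * s ^ 2); auto. unfold Rdiv. rewrite Rmult_assoc, Rinv_l by lra.
    apply Rlt_le_trans with (Rabs (x - m)); [|lra].
    apply Rlt_le_trans with (1 + 2 * s ^ 2 / dl); [|lra]. unfold Rdiv. lra. }
  replace (- ((x - m) * (x - m)) / (2 * s ^ 2)) with (- y) by (unfold y; field; lra).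
  rewrite exp_Ropp. pose proof (exp_ineq1_le y). assert (0 < /dl) by (apply Rinv_0_lt_compat; auto).
  replace dl with (/ / dl) by (field; lra). apply Rinv_lt_contravar. nra. lra.
Qed.

Lemma impR_eqv f l l' : l = l' -> impR f l -> impR f l'.
Proof. intros ->; auto. Qed.

Lemma gs_pos s m x : 0 < gs s m x.
Proof. apply exp_pos. Qed.

Lemma gs_centered s m : 0 < s -> impR (fun x => (x - m) * gs s m x) 0.
Proof.
  intros Hs. split.
  { intros; apply ex_RInt_cont. intros; unfold gs; reg. }
  intros eps He.
  assert (Hs2 : 0 < s ^ 2) by (apply pow_lt; auto).
  destruct (gs_small s m (eps / (2 * s ^ 2)) Hs) as [A [HA HB]].
  { apply Rdiv_lt_0_compat; lra. }
  exists A; split; auto. intros a b Ha Hb.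
  assert (E : RInt (fun x => (x - m) * gs s m x) a b = s ^ 2 * (gs s m a - gs s m b)).
  { assert (H := is_RInt_derive (V:=R_CompleteNormedModule) (fun x => - s ^ 2 * gs s m x) (fun x => (x - m) * gs s m x) a b).
    assert (H' : is_RInt (V:=R_CompleteNormedModule) (fun x => (x - m) * gs s m x) a b (minus (- s ^ 2 * gs s m b) (- s ^ 2 * gs s m a))).
    { apply H.
      - intros x _. unfold gs. auto_derive. auto. toR. replace (- ((x + - m) * (x + - m)) * / (2 * (s * (s * 1)))) with (- ((x - m) * (x - m)) / (2 * s ^ 2)) by (field; lra). field. lra.
      - intros x _. apply continuity_pt_filterlim. unfold gs. reg. }
    rewrite (is_RInt_unique _ _ _ _ H'). unfold minus, plus, opp; simpl. ring. }
  rewrite E, Rminus_0_r.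
  assert (Ha' : A <= Rabs a) by (rewrite Rabs_left1; lra).
  assert (Hb' : A <= Rabs b) by (rewrite Rabs_right; lra).
  pose proof (HB b Hb'). specialize (HB a Ha'). pose proof (gs_pos s m a). pose proof (gs_pos s m b).
  rewrite Rabs_mult, Rabs_right by lra.
  apply Rle_lt_trans with (s ^ 2 * (gs s m a + gs s m b)).
  { apply Rmult_le_compat_l. lra. apply Rabs_le; lra. }
  apply Rlt_le_trans with (s ^ 2 * (eps / (2 * s ^ 2) + eps / (2 * s ^ 2))).
  apply Rmult_lt_compat_l; lra. right; field; lra.
Qed.

Lemma gs_mean s m : 0 < s -> impR (fun x => x * gs s m x / cs s) m.
Proof.
  intros Hs. pose proof (cs_pos s Hs).
  apply impR_ext with (fun x => m * (gs s m x / cs s) + / cs s * ((x - m) * gs s m x)).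
  { intros; unfold Rdiv; field; lra. }
  apply (impR_eqv _ (m * 1 + / cs s * 0)). ring.
  apply impR_plus. apply impR_mulc, gs_norm; auto. apply impR_mulc, gs_centered; auto.
Qed.


Lemma iint_ext d : forall F G l, (forall y, F y = G y) -> iint d F l -> iint d G l.
Proof.
  induction d as [|d IH]; simpl; intros F G l E H.
  - rewrite H; apply E.
  - destruct H as [g [Hg Hi]]. exists g; split; auto.
    intros x. apply IH with (fun v => F (vcons x v)); auto.
Qed.

Lemma iint_eqv d F l l' : l = l' -> iint d F l -> iint d F l'.
Proof. intros ->; auto. Qed.

Lemma iint_plus d : forall F G l1 l2, iint d F l1 -> iint d G l2 -> iint d (fun y => F y + G y) (l1 + l2).
Proof.
  induction d as [|d IH]; simpl; intros F G l1 l2 H1 H2.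
  - subst; auto.
  - destruct H1 as [g1 [Hg1 Hi1]]. destruct H2 as [g2 [Hg2 Hi2]].
    exists (fun x => g1 x + g2 x); split.
    + apply impR_improper, impR_plus; apply improper_impR; auto.
    + intros x. apply (IH (fun v => F (vcons x v)) (fun v => G (vcons x v))); auto.
Qed.

Lemma iint_mulc d : forall F c l, iint d F l -> iint d (fun y => c * F y) (c * l).
Proof.
  induction d as [|d IH]; simpl; intros F c l H.
  - subst; auto.
  - destruct H as [g [Hg Hi]]. exists (fun x => c * g x); split.
    + apply impR_improper, impR_mulc, improper_impR; auto.
    + intros x. apply (IH (fun v => F (vcons x v))); auto.
Qed.

Lemma iint_le d : forall F G l1 l2, (forall y, F y <= G y) -> iint d F l1 -> iint d G l2 -> l1 <= l2.
Proof.
  induction d as [|d IH]; simpl; intros F G l1 l2 E H1 H2.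
  - subst; auto.
  - destruct H1 as [g1 [Hg1 Hi1]]. destruct H2 as [g2 [Hg2 Hi2]].
    apply (impR_le g1 g2); try apply improper_impR; auto.
    intros x. apply (IH (fun v => F (vcons x v)) (fun v => G (vcons x v))); auto.
Qed.

Lemma iint_sum d (h : nat -> (nat -> R) -> R) (l : nat -> R) n :
  (forall j, (j <= n)%nat -> iint d (h j) (l j)) ->
  iint d (fun y => sum_f_R0 (fun j => h j y) n) (sum_f_R0 l n).
Proof.
  induction n as [|n IH]; simpl; intros H.
  - apply H; lia.
  - apply iint_plus. apply IH; intros; apply H; lia. apply H; lia.
Qed.

Fixpoint prodd (d : nat) (f : nat -> R -> R) (y : nat -> R) : R :=
  match d with O => 1 | S d' => f O (y O) * prodd d' (fun i => f (S i)) (fun i => y (S i)) end.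

Fixpoint prodc (d : nat) (c : nat -> R) : R :=
  match d with O => 1 | S d' => c O * prodc d' (fun i => c (S i)) end.

Lemma iint_prod d : forall f c, (forall i, impR (f i) (c i)) -> iint d (prodd d f) (prodc d c).
Proof.
  induction d as [|d IH]; simpl; intros f c H.
  - reflexivity.
  - exists (fun x => f O x * prodc d (fun i => c (S i))). split.
    + apply impR_improper. apply impR_ext with (fun x => prodc d (fun i => c (S i)) * f O x).
      intros; ring. rewrite Rmult_comm. apply impR_mulc, H.
    + intros x. apply (iint_mulc d (prodd d (fun i => f (S i)))). apply IH. intros; apply H.
Qed.


Lemma inner_S d u w : inner (S d) u w = u O * w O + inner d (fun i => u (S i)) (fun i => w (S i)).
Proof.
  destruct d as [|d].
  - simpl. ring.
  - unfold inner. rewrite decomp_sum by lia. simpl. reflexivity.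
Qed.

Lemma inner_ext d u w u' w' : (forall i, u i = u' i) -> (forall i, w i = w' i) -> inner d u w = inner d u' w'.
Proof.
  intros H1 H2. destruct d; simpl; auto. apply sum_eq. intros; rewrite H1, H2; auto.
Qed.

Lemma inner_lin d : forall u v w p q, inner d (fun i => p * u i + q * v i) w = p * inner d u w + q * inner d v w.
Proof.
  induction d as [|d IH]; intros.
  - simpl; ring.
  - rewrite !inner_S. rewrite (IH (fun i => u (S i)) (fun i => v (S i))). ring.
Qed.

Lemma inner_comm d : forall u w, inner d u w = inner d w u.
Proof.
  induction d as [|d IH]; intros.
  - simpl; ring.
  - rewrite !inner_S, IH. ring.
Qed.

Lemma inner_opp d : forall u w, inner d (fun i => - u i) w = - inner d u w.
Proof.
  induction d as [|d IH]; intros.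
  - simpl; ring.
  - rewrite !inner_S, IH. ring.
Qed.

Lemma inner_ge0 d : forall u, 0 <= inner d u u.
Proof.
  induction d as [|d IH]; intros.
  - simpl; lra.
  - rewrite inner_S. pose proof (IH (fun i => u (S i))). nra.
Qed.

Lemma prodd_ext d : forall f f' y, (forall i x, f i x = f' i x) -> prodd d f y = prodd d f' y.
Proof.
  induction d as [|d IH]; intros; simpl; auto. rewrite H. f_equal. apply IH. auto.
Qed.

Lemma gauss_S d s m y : gauss_density (S d) s m y =
  (gs s (m O) (y O) / cs s) * gauss_density d s (fun i => m (S i)) (fun i => y (S i)).
Proof.
  unfold gauss_density, gs, cs. rewrite inner_S.
  simpl pow. unfold Rdiv. rewrite Ropp_plus_distr, Rmult_plus_distr_r, exp_plus.
  rewrite (Rinv_mult (sqrt _) (_ ^ d)). ring.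
Qed.

Lemma gauss_prod d : forall s m y, gauss_density d s m y = prodd d (fun i x => gs s (m i) x / cs s) y.
Proof.
  induction d as [|d IH]; intros.
  - unfold gauss_density, inner. replace (- 0 / (2 * s ^ 2)) with 0 by (unfold Rdiv; ring). rewrite exp_0. simpl. field.
  - rewrite gauss_S, IH. reflexivity.
Qed.

Lemma prodd_mom d : forall f y j, (j < d)%nat ->
  y j * prodd d f y = prodd d (fun i x => if Nat.eqb i j then x * f i x else f i x) y.
Proof.
  induction d as [|d IH]; intros f y j Hj. lia.
  simpl. destruct j as [|j].
  - simpl. change (fun (i:nat) (x:R) => f (S i) x) with (fun i => f (S i)). ring.
  - simpl. rewrite <- (IH (fun i => f (S i)) (fun i => y (S i)) j) by lia. ring.
Qed.

Lemma prodc_mom d : forall j m, (j < d)%nat -> prodc d (fun i => if Nat.eqb i j then m else 1) = m.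
Proof.
  induction d as [|d IH]; intros j m Hj. lia.
  simpl. destruct j as [|j].
  - simpl. assert (forall k c, prodc k (fun _ => c) = c ^ k).
    { induction k; simpl; intros; auto. rewrite IHk; auto. }
    rewrite (H d 1), pow1. ring.
  - simpl. rewrite IH by lia. ring.
Qed.

Lemma prodd_mgf d : forall f v y,
  exp (inner d v y) * prodd d f y = prodd d (fun i x => exp (v i * x) * f i x) y.
Proof.
  induction d as [|d IH]; intros.
  - simpl. rewrite exp_0. ring.
  - rewrite inner_S. simpl. rewrite exp_plus. rewrite <- IH. change (fun (i:nat) (x:R) => f (S i) x) with (fun i => f (S i)). ring.
Qed.

Lemma prodc_mgf d s : forall v m,
  prodc d (fun i => exp (v i * m i + s ^ 2 * v i ^ 2 / 2)) = exp (inner d v m + s ^ 2 * inner d v v / 2).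
Proof.
  induction d as [|d IH]; intros.
  - cbn [inner prodc]. replace (0 + s ^ 2 * 0 / 2) with 0 by field. rewrite exp_0. auto.
  - simpl prodc. rewrite IH, !inner_S, <- exp_plus. f_equal. field.
Qed.

Lemma int_mom d s m j : 0 < s -> (j < d)%nat ->
  iint d (fun y => y j * gauss_density d s m y) (m j).
Proof.
  intros Hs Hj.
  apply iint_ext with (prodd d (fun i x => if Nat.eqb i j then x * (gs s (m i) x / cs s) else gs s (m i) x / cs s)).
  { intros y. rewrite gauss_prod, prodd_mom; auto. }
  rewrite <- (prodc_mom d j (m j)) by auto.
  apply iint_prod. intros i. destruct (Nat.eqb i j) eqn:E.
  - apply Nat.eqb_eq in E; subst. apply impR_ext with (fun x => x * gs s (m j) x / cs s).
    intros; unfold Rdiv; ring. apply gs_mean; auto.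
  - apply gs_norm; auto.
Qed.

Lemma int_mgf d s m v : 0 < s ->
  iint d (fun y => exp (inner d v y) * gauss_density d s m y) (exp (inner d v m + s ^ 2 * inner d v v / 2)).
Proof.
  intros Hs.
  apply iint_ext with (prodd d (fun i x => exp (v i * x) * (gs s (m i) x / cs s))).
  { intros y. rewrite gauss_prod, prodd_mgf; auto. }
  rewrite <- prodc_mgf. apply iint_prod. intros i.
  apply impR_ext with (fun x => exp (v i * x) * gs s (m i) x / cs s).
  intros; unfold Rdiv; ring. apply gs_exp; auto.
Qed.


Lemma z_le_exp z mu : 0 < mu -> z <= / (exp 1 * mu) * exp (mu * z).
Proof.
  intros Hm. pose proof (exp_ineq1_le (mu * z - 1)).
  pose proof (exp_pos 1).
  assert (E : exp (mu * z - 1) * exp 1 = exp (mu * z)) by (rewrite <- exp_plus; f_equal; ring).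
  assert (mu * z <= exp (mu * z) * / exp 1).
  { rewrite <- E. rewrite Rmult_assoc, Rinv_r by lra. lra. }
  rewrite Rinv_mult. apply Rmult_le_reg_l with mu; auto.
  replace (mu * (/ exp 1 * / mu * exp (mu * z))) with (exp (mu * z) * / exp 1) by (field; lra). lra.
Qed.

Lemma inv_le1 x : 1 <= x -> / x <= 1.
Proof. intros. apply Rle_trans with (/1). apply Rinv_le_contravar; lra. rewrite Rinv_1; lra. Qed.

Lemma omega_bounds t : 0 < omega t < 1.
Proof.
  unfold omega. pose proof (exp_pos (- (2 * t))). split.
  apply Rinv_0_lt_compat; lra. rewrite <- Rinv_1. apply Rinv_lt_contravar; lra.
Qed.

Lemma one_m_omega t lam : 0 <= lam <= 1 -> 1 - omega t <= exp (- 2 * lam * t).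
Proof.
  intros Hl. unfold omega. pose proof (exp_pos (- (2 * t))).
  assert (E : 1 - / (1 + exp (- (2 * t))) = exp (- (2 * t)) / (1 + exp (- (2 * t)))) by (field; lra).
  rewrite E. destruct (Rle_or_lt 0 t) as [Ht|Ht].
  - apply Rle_trans with (exp (- (2 * t))).
    + unfold Rdiv. apply Rle_trans with (exp (- (2*t)) * 1); [|lra]. apply Rmult_le_compat_l; [lra|].
      apply inv_le1; lra.
    + destruct (Req_dec lam 1) as [->|Hne]. right; f_equal; ring.
      destruct (Req_dec t 0) as [->|Ht0]. right; f_equal; ring.
      left. apply exp_increasing. nra.
  - apply Rle_trans with 1.
    + unfold Rdiv. apply Rmult_le_reg_r with (1 + exp (- (2 * t))). lra.
      rewrite Rmult_assoc, Rinv_l by lra. lra.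
    + rewrite <- exp_0. destruct (Req_dec lam 0) as [->|Hne]. right; f_equal; ring.
      left. apply exp_increasing. nra.
Qed.

Lemma omega_le t lam : 0 <= lam <= 1 -> omega t <= exp (2 * lam * t).
Proof.
  intros Hl. pose proof (omega_bounds t). unfold omega in *. pose proof (exp_pos (- (2 * t))).
  destruct (Rle_or_lt 0 t) as [Ht|Ht].
  - apply Rle_trans with 1. lra. rewrite <- exp_0.
    destruct (Req_dec lam 0) as [->|Hne]. right; f_equal; ring.
    destruct (Req_dec t 0) as [->|Ht0]. right; f_equal; ring.
    left. apply exp_increasing. nra.
  - apply Rle_trans with (exp (2 * t)).
    + replace (exp (2 * t)) with (/ exp (- (2 * t))) by (rewrite exp_Ropp, Rinv_inv; auto).
      apply Rinv_le_contravar; lra.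
    + destruct (Req_dec lam 1) as [->|Hne]. right; f_equal; ring.
      left. apply exp_increasing. nra.
Qed.

Lemma ptwise1 Z t mu lam : 0 < mu -> 0 <= lam <= 1 ->
  Z - / (exp 1 * mu) * exp (mu * Z - 2 * lam * t) <= Z * omega t.
Proof.
  intros Hm Hl. pose proof (omega_bounds t). pose proof (one_m_omega t lam Hl).
  assert (K0 : 0 < / (exp 1 * mu)) by (apply Rinv_0_lt_compat; pose proof (exp_pos 1); nra).
  replace (mu * Z - 2 * lam * t) with (mu * Z + (- 2 * lam * t)) by ring. rewrite exp_plus.
  pose proof (exp_pos (mu * Z)). pose proof (exp_pos (- 2 * lam * t)).
  destruct (Rle_or_lt Z 0) as [HZ|HZ].
  - assert (0 <= / (exp 1 * mu) * (exp (mu * Z) * exp (- 2 * lam * t))) by (apply Rmult_le_pos; nra).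
    nra.
  - pose proof (z_le_exp Z mu Hm).
    assert (Z * (1 - omega t) <= / (exp 1 * mu) * exp (mu * Z) * exp (- 2 * lam * t)).
    { apply Rle_trans with (/ (exp 1 * mu) * exp (mu * Z) * (1 - omega t)). apply Rmult_le_compat_r; lra.
      apply Rmult_le_compat_l. nra. auto. }
    nra.
Qed.

Lemma ptwise2 Z t mu lam : 0 < mu -> 0 <= lam <= 1 ->
  - (/ (exp 1 * mu) * exp (- (mu * Z - 2 * lam * t))) <= Z * omega t.
Proof.
  intros Hm Hl. pose proof (omega_bounds t). pose proof (omega_le t lam Hl).
  assert (K0 : 0 < / (exp 1 * mu)) by (apply Rinv_0_lt_compat; pose proof (exp_pos 1); nra).
  replace (- (mu * Z - 2 * lam * t)) with (mu * (- Z) + (2 * lam * t)) by ring. rewrite exp_plus.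
  pose proof (exp_pos (mu * - Z)). pose proof (exp_pos (2 * lam * t)).
  destruct (Rle_or_lt 0 Z) as [HZ|HZ].
  - assert (0 <= / (exp 1 * mu) * (exp (mu * - Z) * exp (2 * lam * t))) by (apply Rmult_le_pos; nra).
    nra.
  - pose proof (z_le_exp (- Z) mu Hm).
    assert ((- Z) * omega t <= / (exp 1 * mu) * exp (mu * - Z) * exp (2 * lam * t)).
    { apply Rle_trans with (/ (exp 1 * mu) * exp (mu * - Z) * omega t). apply Rmult_le_compat_r; lra.
      apply Rmult_le_compat_l. nra. auto. }
    nra.
Qed.


Lemma inner_coord d : forall u i, (i < d)%nat -> u i * u i <= inner d u u.
Proof.
  induction d as [|d IH]; intros u i Hi. lia.
  rewrite inner_S. destruct i as [|i].
  - pose proof (inner_ge0 d (fun j => u (S j))). lra.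
  - pose proof (IH (fun j => u (S j)) i ltac:(lia)). simpl in H. nra.
Qed.

Lemma gauss_pos d s m y : 0 < s -> 0 <= gauss_density d s m y.
Proof.
  intros Hs. unfold gauss_density. left. apply Rdiv_lt_0_compat. apply exp_pos.
  apply pow_lt. apply (cs_pos s Hs).
Qed.

Lemma sum_inner d' u v : sum_f_R0 (fun j => v j * u j) d' = inner (S d') u v.
Proof. simpl. apply sum_eq. intros; ring. Qed.

Lemma ln_half b : 0 < b < 1 -> 1/2 <= ln (2 / (1 - b)).
Proof.
  intros Hb. destruct (Rle_or_lt (1/2) (ln (2 / (1 - b)))) as [H|H]; auto.
  exfalso. apply exp_increasing in H. rewrite exp_ln in H.
  2:{ apply Rdiv_lt_0_compat; lra. }
  pose proof (exp_ineq1_le (- (1/2))). rewrite exp_Ropp in H0.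
  pose proof (exp_pos (1/2)).
  assert (exp (1/2) <= 2).
  { apply Rmult_le_reg_r with (/ exp (1/2)). apply Rinv_0_lt_compat; lra.
    rewrite Rinv_r by lra. lra. }
  assert (2 <= 2 / (1 - b)).
  { unfold Rdiv. rewrite <- (Rmult_1_r 2) at 1. apply Rmult_le_compat_l. lra.
    rewrite <- Rinv_1. apply Rinv_le_contravar; lra. }
  lra.
Qed.

Lemma numeric S s a r b P Q : 0 < S -> 0 < s -> 0 < a < 1 -> 1 <= r -> 0 < b < 1 ->
  r ^ 2 * (5 * ln (2 / (1 - b))) <= a ^ 2 * S / s ^ 2 -> a * S <= P -> Q <= r ^ 2 * S ->
  2 * (S / exp 1) * exp ((/ S * S - a / (r ^ 2 * s ^ 2) * P) +
      s ^ 2 * (/ S * / S * S - 2 * / S * (a / (r ^ 2 * s ^ 2)) * P + (a / (r ^ 2 * s ^ 2)) * (a / (r ^ 2 * s ^ 2)) * Q) / 2)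
  <= (1 - b) * S.
Proof.
  intros HS Hs Ha Hr Hb Hc HP HQ.
  set (L := ln (2 / (1 - b))) in *.
  pose proof (ln_half b Hb) as HL. fold L in HL.
  set (c := a / (r ^ 2 * s ^ 2)).
  assert (Hs2 : 0 < s ^ 2) by (apply pow_lt; auto).
  assert (Hr2 : 1 <= r ^ 2) by (simpl; nra).
  assert (Hc0 : 0 < c) by (unfold c; apply Rdiv_lt_0_compat; nra).
  set (T := S / s ^ 2).
  assert (HT : 0 < T) by (unfold T; apply Rdiv_lt_0_compat; auto).
  set (X := a ^ 2 * T / r ^ 2).
  assert (HX : 5 * L <= X).
  { unfold X, T. apply Rmult_le_reg_l with (r ^ 2). lra.
    replace (r ^ 2 * (a ^ 2 * (S / s ^ 2) / r ^ 2)) with (a ^ 2 * S / s ^ 2) by (field; lra). lra. }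
  assert (HTX : X <= T).
  { unfold X. apply Rmult_le_reg_l with (r ^ 2). lra.
    replace (r ^ 2 * (a ^ 2 * T / r ^ 2)) with (a ^ 2 * T) by (field; lra).
    assert (a ^ 2 <= 1) by (simpl; nra). nra. }
  assert (E1 : c * a * S = X) by (unfold c, X, T; field; lra).
  assert (E2 : s ^ 2 * (c * c * (r ^ 2 * S)) / 2 = X / 2) by (unfold c, X, T; field; lra).
  assert (E3 : s ^ 2 * (/ S * / S * S) / 2 = / (2 * T)) by (unfold T; field; lra).
  assert (HE : (/ S * S - c * P) + s ^ 2 * (/ S * / S * S - 2 * / S * c * P + c * c * Q) / 2
              <= 1 + / (2 * T) - X / 2).
  { assert (I1 : c * a * S <= c * P) by (rewrite Rmult_assoc; apply Rmult_le_compat_l; lra).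
    assert (I2 : 0 <= s ^ 2 * (2 * / S * c * P) / 2).
    { assert (0 < / S) by (apply Rinv_0_lt_compat; auto). assert (0 <= P) by nra.
      assert (0 <= / S * c) by nra. assert (0 <= / S * c * P) by nra.
      replace (s ^ 2 * (2 * / S * c * P) / 2) with (s ^ 2 * (/ S * c * P)) by (field; lra). nra. }
    assert (I3 : s ^ 2 * (c * c * Q) / 2 <= s ^ 2 * (c * c * (r ^ 2 * S)) / 2).
    { assert (0 <= s ^ 2 * (c * c)) by (apply Rmult_le_pos; nra). unfold Rdiv. apply Rmult_le_compat_r; [lra|]. replace (s ^ 2 * (c * c * Q)) with (s ^ 2 * (c * c) * Q) by ring. replace (s ^ 2 * (c * c * (r ^ 2 * S))) with (s ^ 2 * (c * c) * (r ^ 2 * S)) by ring. apply Rmult_le_compat_l; lra. }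
    replace (/ S * S) with 1 by (field; lra).
    replace (s ^ 2 * (/ S * / S * S - 2 * / S * c * P + c * c * Q) / 2) with
      (s ^ 2 * (/ S * / S * S) / 2 - s ^ 2 * (2 * / S * c * P) / 2 + s ^ 2 * (c * c * Q) / 2) by (field; lra).
    rewrite E3. lra. }
  assert (HT2 : / (2 * T) <= 1 / 5).
  { apply Rle_trans with (/ (2 * (5/2))). apply Rinv_le_contravar; lra. lra. }
  assert (HE2 : (/ S * S - c * P) + s ^ 2 * (/ S * / S * S - 2 * / S * c * P + c * c * Q) / 2 - 1 <= - L)
    by lra.
  assert (HeL : exp (- L) = (1 - b) / 2).
  { unfold L. rewrite exp_Ropp, exp_ln. field; lra. apply Rdiv_lt_0_compat; lra. }
  set (E := (/ S * S - c * P) + s ^ 2 * (/ S * / S * S - 2 * / S * c * P + c * c * Q) / 2) in *.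
  assert (Hexp : exp E / exp 1 <= (1 - b) / 2).
  { rewrite <- HeL. replace (exp E / exp 1) with (exp (E - 1)).
    destruct (Req_dec (E - 1) (- L)) as [->|Hn]. lra. left; apply exp_increasing; lra.
    unfold Rminus. rewrite exp_plus, exp_Ropp. reflexivity. }
  replace (2 * (S / exp 1) * exp E) with (2 * S * (exp E / exp 1)) by (field; pose proof (exp_pos 1); lra).
  nra.
Qed.

End Aux.
Import Aux.


Theorem lemma2 (d : nat) (sigma : R) (theta_star : nat -> R) (a r kappa1 : R) :
  (1 <= d)%nat -> 0 < sigma ->
  (exists i, (i < d)%nat /\ theta_star i <> 0) ->
  0 < a < 1 -> 1 <= r -> a < kappa1 < 1 ->
  r <= a * snr d sigma theta_star / sqrt (5 * ln (2 / (1 - a / kappa1))) ->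
  forall theta : nat -> R, in_D d a r theta_star theta ->
  forall m : nat -> R, is_EM d sigma theta_star theta m ->
  inner d m theta_star >= (a / kappa1) * norm d theta_star ^ 2.
Proof.
  intros Hd Hs [i0 [Hi0 Hne]] Ha Hr Hk Hcond theta [HH HB] m HEM.
  destruct d as [|d']; [lia|].
  set (D := S d') in *.
  set (ts := theta_star) in *.
  set (S := inner D ts ts).
  assert (HS : 0 < S).
  { pose proof (inner_coord D ts i0 Hi0). assert (0 < ts i0 * ts i0) by (apply Rsqr_pos_lt; auto). unfold S; lra. }
  assert (Hn2 : norm D ts ^ 2 = S) by (unfold norm; apply pow2_sqrt; lra).
  set (b := a / kappa1).
  assert (Hb : 0 < b < 1).
  { unfold b. split. apply Rdiv_lt_0_compat; lra. apply Rmult_lt_reg_r with kappa1. lra.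
    unfold Rdiv. rewrite Rmult_assoc, Rinv_l by lra. lra. }
  set (mu := / S).
  assert (Hmu : 0 < mu) by (apply Rinv_0_lt_compat; auto).
  set (lam := a / (2 * r ^ 2)).
  assert (Hr2 : 1 <= r ^ 2) by (simpl; nra).
  assert (Hlam : 0 <= lam <= 1).
  { unfold lam. split. left; apply Rdiv_lt_0_compat; lra.
    apply Rmult_le_reg_r with (2 * r ^ 2). lra. unfold Rdiv. rewrite Rmult_assoc, Rinv_l by lra. lra. }
  set (c := a / (r ^ 2 * sigma ^ 2)).
  assert (Hs2 : 0 < sigma ^ 2) by (apply pow_lt; auto).
  assert (Hc : c = 2 * lam / sigma ^ 2) by (unfold c, lam; field; lra).
  set (w := fun i => mu * ts i + (- c) * theta i).
  set (K := / (exp 1 * mu)).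
  set (php := fun y => gauss_density D sigma ts y).
  set (phm := fun y => gauss_density D sigma (fun i => - ts i) y).
  set (M := exp (inner D w ts + sigma ^ 2 * inner D w w / 2)).
  assert (HA : iint D (fun y => sum_f_R0 (fun j => ts j * (2 * (y j * omega (inner D theta y / sigma ^ 2)) * mix_density D sigma ts y)) d')
                 (inner D m ts)).
  { unfold D. rewrite <- sum_inner. apply iint_sum. intros j Hj.
    apply iint_mulc. apply HEM. unfold D; lia. }
  assert (HBi : iint D (fun y => inner D y ts * php y + ((- K) * (exp (inner D w y) * php y)
                                 + (- K) * (exp (inner D (fun i => - w i) y) * phm y)))
                 (S + ((- K) * M + (- K) * M))).
  { apply iint_plus; [|apply iint_plus; apply iint_mulc].
    - apply iint_ext with (fun y => sum_f_R0 (fun j => ts j * (y j * php y)) d').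
      { intros y. unfold D. rewrite <- sum_inner. rewrite Rmult_comm, scal_sum. apply sum_eq. intros; ring. }
      unfold S, D. rewrite <- sum_inner. apply iint_sum. intros j Hj. apply iint_mulc.
      apply int_mom; auto. lia.
    - apply int_mgf; auto.
    - unfold M. apply iint_eqv with (exp (inner D (fun i => - w i) (fun i => - ts i) + sigma ^ 2 * inner D (fun i => - w i) (fun i => - w i) / 2)).
      + f_equal. rewrite !inner_opp. rewrite (inner_comm D w (fun i => - ts i)), (inner_comm D w (fun i => - w i)).
        rewrite !inner_opp. rewrite (inner_comm D ts w). rewrite !Ropp_involutive. reflexivity.
      + apply int_mgf; auto. }
  assert (Hpt : forall y, inner D y ts * php y + ((- K) * (exp (inner D w y) * php y)
                                 + (- K) * (exp (inner D (fun i => - w i) y) * phm y))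
             <= sum_f_R0 (fun j => ts j * (2 * (y j * omega (inner D theta y / sigma ^ 2)) * mix_density D sigma ts y)) d').
  { intros y.
    set (Z := inner D y ts). set (t := inner D theta y / sigma ^ 2).
    assert (Ew : inner D w y = mu * Z - 2 * lam * t).
    { unfold w. rewrite inner_lin. unfold Z, t. rewrite (inner_comm D ts y), Hc. field. lra. }
    assert (Ewm : inner D (fun i => - w i) y = - (mu * Z - 2 * lam * t)) by (rewrite inner_opp, Ew; auto).
    assert (Esum : sum_f_R0 (fun j => ts j * (2 * (y j * omega t) * mix_density D sigma ts y)) d'
                   = Z * omega t * php y + Z * omega t * phm y).
    { rewrite (sum_eq _ (fun j => (y j * ts j) * (omega t * (php y + phm y)))).
      2:{ intros; unfold mix_density, php, phm. field. }
      rewrite <- scal_sum. unfold Z, D. rewrite sum_inner, inner_comm. ring. }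
    fold t. rewrite Esum, Ew, Ewm.
    pose proof (ptwise1 Z t mu lam Hmu Hlam). pose proof (ptwise2 Z t mu lam Hmu Hlam).
    pose proof (gauss_pos D sigma ts y Hs). pose proof (gauss_pos D sigma (fun i => - ts i) y Hs).
    fold K in H, H0. fold (php y) in H1. fold (phm y) in H2.
    assert (A1 : (Z - K * exp (mu * Z - 2 * lam * t)) * php y <= Z * omega t * php y) by (apply Rmult_le_compat_r; auto).
    assert (A2 : (- (K * exp (- (mu * Z - 2 * lam * t)))) * phm y <= Z * omega t * phm y) by (apply Rmult_le_compat_r; auto).
    lra. }
  pose proof (iint_le D _ _ _ _ Hpt HBi HA) as Hle.
  assert (HP : a * S <= inner D theta ts) by (unfold in_H in HH; rewrite Hn2 in HH; lra).
  assert (HQ : inner D theta theta <= r ^ 2 * S).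
  { unfold in_B, norm in HB. fold ts in HB. fold S in HB.
    pose proof (sqrt_pos (inner D theta theta)). pose proof (sqrt_pos S).
    assert (sqrt (inner D theta theta) ^ 2 <= (r * sqrt S) ^ 2) by (apply pow_incr; lra).
    rewrite pow2_sqrt in H1 by apply inner_ge0. rewrite Rpow_mult_distr, pow2_sqrt in H1 by lra. lra. }
  set (L := ln (2 / (1 - b))) in *.
  assert (HL := ln_half b Hb). fold L in HL.
  assert (Hc2 : r ^ 2 * (5 * L) <= a ^ 2 * S / sigma ^ 2).
  { unfold snr, norm in Hcond. fold ts S in Hcond. fold b L in Hcond.
    assert (Hq : 0 < sqrt (5 * L)) by (apply sqrt_lt_R0; lra).
    assert (H1 : r * sqrt (5 * L) <= a * sqrt S / sigma).
    { apply Rmult_le_reg_r with (/ sqrt (5 * L)). apply Rinv_0_lt_compat; lra.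
      rewrite Rmult_assoc, Rinv_r by lra. unfold Rdiv in Hcond |- *. lra. }
    assert (H2 : (r * sqrt (5 * L)) ^ 2 <= (a * sqrt S / sigma) ^ 2) by (apply pow_incr; split; [nra|lra]).
    rewrite Rpow_mult_distr, pow2_sqrt in H2 by lra.
    replace ((a * sqrt S / sigma) ^ 2) with (a ^ 2 * sqrt S ^ 2 / sigma ^ 2) in H2 by (field; lra).
    rewrite pow2_sqrt in H2 by lra. lra. }
  pose proof (numeric S sigma a r b (inner D theta ts) (inner D theta theta) HS Hs Ha Hr Hb Hc2 HP HQ) as Hnum.
  assert (HM : M = exp ((/ S * S - a / (r ^ 2 * sigma ^ 2) * inner D theta ts) +
      sigma ^ 2 * (/ S * / S * S - 2 * / S * (a / (r ^ 2 * sigma ^ 2)) * inner D theta ts + (a / (r ^ 2 * sigma ^ 2)) * (a / (r ^ 2 * sigma ^ 2)) * inner D theta theta) / 2)).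
  { unfold M. f_equal. unfold w. rewrite !inner_lin. rewrite (inner_comm D ts (fun i => mu * ts i + - c * theta i)).
    rewrite (inner_comm D theta (fun i => mu * ts i + - c * theta i)). rewrite !inner_lin.
    rewrite (inner_comm D ts theta). fold S. unfold mu, c. field. lra. }
  assert (HK : K = S / exp 1) by (unfold K, mu; rewrite Rinv_mult, Rinv_inv; unfold Rdiv; ring).
  rewrite <- HM, <- HK in Hnum.
  rewrite Hn2. fold b. lra.
Qed.
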